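(* Let $R$ be a local ring with maximal ideal $\mathfrak{m}$, complete and separated with respect to the $\mathfrak{m}$-adic topology, $\sigma$ a ring endomorphism of $R$ with $\sigma(\mathfrak{m})\subseteq\mathfrak{m}$, and $\delta$ a $\sigma$-derivation with $\delta(R)\subseteq\mathfrak{m}$ and $\delta(\mathfrak{m})\subseteq\mathfrak{m}^2$. Let $A=R[[X;\sigma,\delta]]$. An element $f=\sum f_iX^i\in A$ is a unit in $A$ if and only if its constant term $f_0$ is a unit in $R$. In particular $A$ is a local ring.
   Context: A $\sigma$-derivation is an additive map with $\delta(rs)=\delta(r)s+\sigma(r)\delta(s)$. $R[[X;\sigma,\delta]]$ consists of formal series $\sum_{n\ge0}r_nX^n$ with multiplication determined by $Xr=\sigma(r)X+\delta(r)$. A local ring is one whose non-units form a proper two-sided ideal. *)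

(* Defs.v *)
From HB Require Import structures.
From mathcomp Require Import all_boot all_order all_algebra.
Set Implicit Arguments. Unset Strict Implicit. Unset Printing Implicit Defensive.
Import Order.TTheory GRing.Theory.
Local Open Scope ring_scope.

Section SkewSeries.
Variable R : unitRingType.

Definition nonunit (x : R) : Prop := ~ (x \is a GRing.unit).

Definition local_ring : Prop :=
  (1 : R) \is a GRing.unit /\ nonunit 0 /\
  (forall x y, nonunit x -> nonunit y -> nonunit (x + y)) /\
  (forall a x, nonunit x -> nonunit (a * x) /\ nonunit (x * a)).

(* Powers I^n of an ideal I: I^0 = R, I^(n+1) = additive span of I * I^n. *)
Inductive idpow (I : R -> Prop) : nat -> R -> Prop :=
| idpow0 x : idpow I 0 x
| idpow_zero n : idpow I n 0
| idpow_mul n a b : I a -> idpow I n b -> idpow I n.+1 (a * b)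
| idpow_add n x y : idpow I n x -> idpow I n y -> idpow I n (x + y).

Definition adic_lim (I : R -> Prop) (u : nat -> R) (l : R) : Prop :=
  forall k, exists N, forall n, (N <= n)%N -> idpow I k (u n - l).

Definition adic_cauchy (I : R -> Prop) (u : nat -> R) : Prop :=
  forall k, exists N, forall n p, (N <= n)%N -> (N <= p)%N -> idpow I k (u n - u p).

Definition adic_complete (I : R -> Prop) : Prop :=
  forall u, adic_cauchy I u -> exists l, adic_lim I u l.

Definition adic_separated (I : R -> Prop) : Prop :=
  forall x, (forall k, idpow I k x) -> x = 0.

Definition sigma_derivation (s d : R -> R) : Prop :=
  (forall x y, d (x + y) = d x + d y) /\
  (forall x y, d (x * y) = d x * y + s x * d y).

(* xcoef s d i b k = coefficient of X^k in X^i b, using X r = s(r) X + d(r). *)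
Fixpoint xcoef (s d : R -> R) (i : nat) (b : R) (k : nat) : R :=
  match i with
  | 0 => if k == 0%N then b else 0
  | i'.+1 => (if k is k'.+1 then s (xcoef s d i' b k') else 0) + d (xcoef s d i' b k)
  end.

(* Elements of R[[X;s,d]] : coefficient sequences f, f = sum_i f i X^i. *)
Definition mul_psum (s d : R -> R) (f g : nat -> R) (n N : nat) : R :=
  \sum_(i < N) \sum_(j < n.+1) f i * xcoef s d i (g j) (n - j).

(* h = f * g in R[[X;s,d]], coefficients defined as I-adic limits. *)
Definition is_mul (I : R -> Prop) (s d : R -> R) (f g h : nat -> R) : Prop :=
  forall n, adic_lim I (mul_psum s d f g n) (h n).

Definition sone : nat -> R := fun n => if n == 0%N then 1 else 0.
Definition szero : nat -> R := fun _ => 0.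
Definition sadd (f g : nat -> R) : nat -> R := fun n => f n + g n.

Definition sunit (I : R -> Prop) (s d : R -> R) (f : nat -> R) : Prop :=
  exists g, is_mul I s d f g sone /\ is_mul I s d g f sone.

Definition skew_local (I : R -> Prop) (s d : R -> R) : Prop :=
  sunit I s d sone /\ ~ sunit I s d szero /\
  (forall f g, ~ sunit I s d f -> ~ sunit I s d g -> ~ sunit I s d (sadd f g)) /\
  (forall a f h, ~ sunit I s d f -> is_mul I s d a f h -> ~ sunit I s d h) /\
  (forall a f h, ~ sunit I s d f -> is_mul I s d f a h -> ~ sunit I s d h).

End SkewSeries.

(* Main.v *)
Require Import Defs.
From mathcomp Require Import all_boot all_order all_algebra.
From Stdlib Require Import FunctionalExtensionality IndefiniteDescription.
From mathcomp Require Import zify.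
Import GRing.Theory.
Local Open Scope ring_scope.
Set Implicit Arguments. Unset Strict Implicit. Unset Printing Implicit Defensive.

Section Work.
Variable R : unitRingType.
Variable sigma : {rmorphism R -> R}.
Variable delta : R -> R.
Hypothesis Hloc : local_ring R.
Hypothesis Hcomp : adic_complete (@nonunit R).
Hypothesis Hsep : adic_separated (@nonunit R).
Hypothesis Hsig : forall x, nonunit x -> nonunit (sigma x).
Hypothesis Hder : sigma_derivation sigma delta.
Hypothesis Hdm : forall x, nonunit (delta x).
Hypothesis Hdm2 : forall x, nonunit x -> idpow (@nonunit R) 2 (delta x).

Notation M := (idpow (@nonunit R)).

Lemma nu0 : nonunit (0 : R). Proof. by case: Hloc => _ []. Qed.
Lemma nuD (x y : R) : nonunit x -> nonunit y -> nonunit (x + y).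
Proof. by case: Hloc => _ [_ [H _]]; apply: H. Qed.
Lemma nuMl (a x : R) : nonunit x -> nonunit (a * x).
Proof. by case: Hloc => _ [_ [_ H]] Hx; case: (H a x Hx). Qed.
Lemma nuMr (a x : R) : nonunit x -> nonunit (x * a).
Proof. by case: Hloc => _ [_ [_ H]] Hx; case: (H a x Hx). Qed.

Lemma M_Ml e r x : M e x -> M e (r * x).
Proof.
elim=> [y|n|n a b Ha Hb IH|n y z _ IH1 _ IH2].
- exact: idpow0.
- rewrite mulr0; exact: idpow_zero.
- rewrite mulrA; apply: idpow_mul => //; exact: nuMl.
- rewrite mulrDr; exact: idpow_add.
Qed.

Lemma M_Mr e r x : M e x -> M e (x * r).
Proof.
elim=> [y|n|n a b Ha Hb IH|n y z _ IH1 _ IH2].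
- exact: idpow0.
- rewrite mul0r; exact: idpow_zero.
- rewrite -mulrA; exact: idpow_mul.
- rewrite mulrDl; exact: idpow_add.
Qed.

Lemma M0 e : M e 0. Proof. exact: idpow_zero. Qed.
Lemma MD e x y : M e x -> M e y -> M e (x + y). Proof. exact: idpow_add. Qed.
Lemma MN e x : M e x -> M e (- x).
Proof. by move=> H; rewrite -mulN1r; apply: M_Ml. Qed.
Lemma MB e x y : M e x -> M e y -> M e (x - y).
Proof. by move=> H1 H2; apply: MD => //; apply: MN. Qed.
Lemma MBC e x y : M e (x - y) -> M e (y - x).
Proof. by move=> H; rewrite -opprB; apply: MN. Qed.
Lemma Mtr e x y z : M e (x - y) -> M e (y - z) -> M e (x - z).
Proof. by move=> H1 H2; have := MD H1 H2; rewrite addrA subrK. Qed.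

Lemma MM e e' x y : M e x -> M e' y -> M (e + e') (x * y).
Proof.
move=> Hx Hy; elim: Hx => [z|n|n a b Ha Hb IH|n z w _ IH1 _ IH2].
- by rewrite add0n; apply: M_Ml.
- rewrite mul0r; exact: idpow_zero.
- rewrite -mulrA addSn; exact: idpow_mul.
- rewrite mulrDl; exact: idpow_add.
Qed.

Lemma MS e x : M e.+1 x -> M e x.
Proof.
move Ee : e.+1 => e' H; elim: H e Ee => [y|n|n a b Ha Hb IH|n y z _ IH1 _ IH2] e Ee.
- by [].
- exact: idpow_zero.
- case: Ee => ->; exact: M_Ml.
- apply: idpow_add; [exact: IH1|exact: IH2].
Qed.

Lemma Mle e e' x : (e' <= e)%N -> M e x -> M e' x.
Proof.
move=> /subnK <-; elim: (e - e')%N => [|d IH] //= H.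
by apply: IH; apply: MS; rewrite -addSn.
Qed.

Lemma M1nu (x : R) : M 1 x <-> nonunit x.
Proof.
split.
- move Ee : 1%N => e H; elim: H Ee => [y|n|n a b Ha Hb IH|n y z _ IH1 _ IH2] Ee //.
  + exact: nu0.
  + exact: nuMr.
  + by apply: nuD; [exact: IH1|exact: IH2].
- move=> H; rewrite -[x]mulr1; apply: idpow_mul => //; exact: idpow0.
Qed.

Lemma Msig e x : M e x -> M e (sigma x).
Proof.
elim=> [y|n|n a b Ha Hb IH|n y z _ IH1 _ IH2].
- exact: idpow0.
- rewrite rmorph0; exact: idpow_zero.
- rewrite rmorphM; apply: idpow_mul => //; exact: Hsig.
- rewrite rmorphD; exact: idpow_add.
Qed.

Lemma dD x y : delta (x + y) = delta x + delta y.
Proof. by case: Hder. Qed.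
Lemma dM x y : delta (x * y) = delta x * y + sigma x * delta y.
Proof. by case: Hder. Qed.
Lemma d0 : delta 0 = 0.
Proof. by apply: (@addrI _ (delta 0)); rewrite -dD !addr0. Qed.
Lemma dN x : delta (- x) = - delta x.
Proof. by apply: (@addrI _ (delta x)); rewrite -dD !subrr d0. Qed.
Lemma dB x y : delta (x - y) = delta x - delta y.
Proof. by rewrite dD dN. Qed.
Lemma d1 : delta 1 = 0.
Proof.
apply: (@addrI _ (delta 1)); rewrite addr0.
by rewrite -{3}[1]mulr1 dM rmorph1 mulr1 mul1r.
Qed.
Lemma dsum I (r : seq I) (P : pred I) (F : I -> R) :
  delta (\sum_(i <- r | P i) F i) = \sum_(i <- r | P i) delta (F i).
Proof. exact: (big_morph delta dD d0). Qed.

Lemma Mdel e x : M e x -> M e.+1 (delta x).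
Proof.
elim=> [y|n|n a b Ha Hb IH|n y z _ IH1 _ IH2].
- by apply/M1nu.
- rewrite d0; exact: idpow_zero.
- rewrite dM; apply: idpow_add.
  + by have := MM (Hdm2 Ha) Hb; move=> H; exact: H.
  + by have := MM (proj2 (M1nu _) (Hsig Ha)) IH; move=> H; exact: H.
- rewrite dD; exact: idpow_add.
Qed.


Definition D (v : nat -> R) : nat -> R :=
  fun t => (if t is t'.+1 then sigma (v t') else 0) + delta (v t).
Definition Dp i v := iter i D v.
Definition F e (v : nat -> R) := forall t, M (e - t) (v t).
Definition Lo e n (v : nat -> R) := forall t, (t <= n)%N -> M e (v t).
Definition Phi K (f v : nat -> R) t := \sum_(i < K) f i * Dp i v t.

Lemma Msum e K (G : 'I_K -> R) : (forall i, M e (G i)) -> M e (\sum_(i < K) G i).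
Proof. move=> H; apply: (big_ind (M e)) => //; [exact: M0|exact: MD]. Qed.

Lemma F0 v : F 0 v. Proof. move=> t; exact: idpow0. Qed.

Lemma D_F e v : F e v -> F e.+1 (D v).
Proof.
move=> H [|t]; rewrite /D.
- rewrite add0r subn0; have := Mdel (H 0%N); rewrite subn0; exact.
- apply: MD; first by rewrite subSS; apply: Msig.
  apply: (Mle _ (Mdel (H t.+1))); lia.
Qed.

Lemma Dp_F e i v : F e v -> F (e + i) (Dp i v).
Proof.
elim: i => [|i IH] H; first by rewrite addn0.
rewrite addnS /Dp iterS; apply: D_F; exact: IH.
Qed.

Lemma Dp_M i v t : M (i - t) (Dp i v t).
Proof. have := Dp_F i (F0 v) t; rewrite add0n; exact. Qed.

Lemma D_Lo e n v : Lo e n v -> Lo e n (D v).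
Proof.
move=> H [|t] Ht; rewrite /D.
- rewrite add0r; apply: (Mle _ (Mdel (H 0%N Ht))); lia.
- apply: MD; first by apply: Msig; apply: H; lia.
  apply: (Mle _ (Mdel (H _ Ht))); lia.
Qed.

Lemma Dp_Lo e n i v : Lo e n v -> Lo e n (Dp i v).
Proof. elim: i => [|i IH] H //; rewrite /Dp iterS; apply: D_Lo; exact: IH. Qed.

Lemma D_add v w : D (fun s => v s + w s) = (fun t => D v t + D w t).
Proof.
apply: functional_extensionality => -[|t]; rewrite /D.
- by rewrite !add0r dD.
- by rewrite rmorphD dD addrACA.
Qed.

Lemma D_opp v : D (fun s => - v s) = (fun t => - D v t).
Proof.
apply: functional_extensionality => -[|t]; rewrite /D.
- by rewrite !add0r dN.
- by rewrite rmorphN dN opprD.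
Qed.

Lemma Dp_add i v w : Dp i (fun s => v s + w s) = (fun t => Dp i v t + Dp i w t).
Proof. elim: i => [|i IH] //; rewrite /Dp !iterS -/(Dp i _) IH D_add. by []. Qed.

Lemma Dp_opp i v : Dp i (fun s => - v s) = (fun t => - Dp i v t).
Proof. elim: i => [|i IH] //; rewrite /Dp !iterS -/(Dp i _) IH D_opp. by []. Qed.

Lemma Dp_sub i v w t : Dp i (fun s => v s - w s) t = Dp i v t - Dp i w t.
Proof. by rewrite Dp_add Dp_opp. Qed.

Lemma Dp_S i v : Dp i.+1 v = D (Dp i v).
Proof. by rewrite /Dp iterS. Qed.
Lemma Dp_Sr i v : Dp i.+1 v = Dp i (D v).
Proof. by rewrite /Dp iterSr. Qed.

Lemma Dp_xcoef i v n :
  Dp i v n = \sum_(j < n.+1) xcoef sigma delta i (v j) (n - j).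
Proof.
elim: i n => [|i IH] n.
- rewrite big_ord_recr /= subnn eqxx big1 ?add0r // => j _.
  by have := ltn_ord j; case: eqP => // /eqP; rewrite subn_eq0; lia.
- rewrite Dp_S /D /= big_split /= -dsum -IH; congr (_ + _).
  case: n => [|n]; first by rewrite big_ord1.
  rewrite big_ord_recr /= subnn addr0 IH rmorph_sum; apply: eq_bigr => j _.
  by rewrite subSn //; have := ltn_ord j.
Qed.

Lemma psumE f g n N : mul_psum sigma delta f g n N = Phi N f g n.
Proof. by apply: eq_bigr => i _; rewrite Dp_xcoef mulr_sumr. Qed.


Lemma D_sum C (G : 'I_C -> nat -> R) t :
  D (fun s => \sum_(j < C) G j s) t = \sum_(j < C) D (G j) t.
Proof.
rewrite /D; case: t => [|t].
- by rewrite add0r dsum; apply: eq_bigr => j _; rewrite add0r.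
- by rewrite rmorph_sum dsum -big_split.
Qed.

Lemma D_scal r v t : D (fun s => r * v s) t = sigma r * D v t + delta r * v t.
Proof.
rewrite /D; case: t => [|t].
- by rewrite dM !add0r addrC.
- by rewrite dM rmorphM mulrDr -addrA [delta r * _ + _]addrC.
Qed.

Lemma Phi_tail K N f v t : (K <= N)%N -> M (K - t) (Phi N f v t - Phi K f v t).
Proof.
elim: N => [|N IH] HK.
- by rewrite leqn0 in HK; move/eqP: HK => ->; rewrite subrr; apply: M0.
- case: (ltnP K N.+1) => h.
  + rewrite /Phi big_ord_recr /= -/(Phi N f v t) addrAC; apply: MD; first exact: IH.
    by apply: M_Ml; apply: (Mle _ (Dp_M _ _ _)); lia.
  + have -> : K = N.+1 by lia.
    by rewrite subrr; apply: M0.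
Qed.

Lemma Phi_F e K f v t : F e v -> M (e - t) (Phi K f v t).
Proof.
move=> H; apply: Msum => i; apply: M_Ml; apply: (Mle _ (Dp_F i H t)); lia.
Qed.

Lemma Phi_sub K f v w t : Phi K f (fun s => v s - w s) t = Phi K f v t - Phi K f w t.
Proof.
by rewrite /Phi -sumrB; apply: eq_bigr => i _; rewrite Dp_sub mulrBr.
Qed.

Lemma lim_partial f g u n k C :
  is_mul (@nonunit R) sigma delta f g u -> (n + k <= C)%N -> M k (Phi C f g n - u n).
Proof.
move=> H HC; case: (H n k) => N HN.
have := HN (maxn N C) (leq_maxl _ _); rewrite psumE => H1.
have H2 := Phi_tail f g n (leq_maxr N C).
have := MD (MN (Mle _ H2)) H1.
rewrite opprB addrA subrK; apply; lia.
Qed.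

Lemma step C g h n t : (t <= n)%N ->
  M (C - n) (Phi C (D g) h t - D (Phi C g h) t).
Proof.
move=> Ht; rewrite /Phi (D_sum (fun j s => g j * Dp j h s)).
under [X in _ - X]eq_bigr => j _ do rewrite D_scal -Dp_S.
rewrite /D -/D; under [X in X - _]eq_bigr => j _ do rewrite mulrDl.
rewrite big_split /= big_split /= opprD addrACA subrr addr0.
case: C => [|C]; first by rewrite !big_ord0 subrr; apply: M0.
rewrite big_ord_recl big_ord_recr /= mul0r add0r opprD addrA subrr add0r.
apply: MN; apply: M_Ml; rewrite -Dp_S; apply: (Mle _ (Dp_M _ _ _)); lia.
Qed.


Lemma key C h n i g t : (t <= n)%N ->
  M (C - n) (Phi C (Dp i g) h t - Dp i (Phi C g h) t).
Proof.
move=> Ht; elim: i g => [|i IH] g; first by rewrite subrr; apply: M0.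
rewrite Dp_Sr [Dp i.+1 _]Dp_Sr.
apply: Mtr (IH (D g)) _.
rewrite -Dp_sub; apply: (Dp_Lo _ _ Ht) => s Hs; exact: step.
Qed.

Lemma assoc f g h u v w :
  is_mul (@nonunit R) sigma delta f g u -> is_mul (@nonunit R) sigma delta g h v ->
  is_mul (@nonunit R) sigma delta u h w -> is_mul (@nonunit R) sigma delta f v w.
Proof.
move=> Hfg Hgh Huh n k; exists ((n + k) + k)%N => N HN; rewrite psumE.
set C := (n + k)%N; set A := (C + k)%N.
have S6 : M k (Phi N f v n - Phi A f v n).
  by apply: (Mle _ (Phi_tail _ _ _ HN)); rewrite /A /C; lia.
have S1 : M k (Phi C u h n - w n) by apply: (lim_partial Huh); rewrite /C.
have S2 : M k (Phi C (Phi A f g) h n - Phi C u h n).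
  rewrite /Phi -sumrB; apply: Msum => m; rewrite -mulrBl; apply: M_Mr.
  rewrite -/(Phi A f g m); apply: (lim_partial Hfg).
  by have := ltn_ord m; rewrite /A /C; lia.
have S3 : Phi C (Phi A f g) h n = \sum_(i < A) f i * Phi C (Dp i g) h n.
  rewrite /Phi; under eq_bigr => m _ do rewrite mulr_suml.
  rewrite exchange_big /=; apply: eq_bigr => i _; rewrite mulr_sumr.
  by apply: eq_bigr => m _; rewrite mulrA.
have S4 : M k (\sum_(i < A) f i * Phi C (Dp i g) h n -
               \sum_(i < A) f i * Dp i (Phi C g h) n).
  rewrite -sumrB; apply: Msum => i; rewrite -mulrBr; apply: M_Ml.
  have := @key C h n i g n (leqnn n); rewrite /C; have -> : (n + k - n = k)%N by lia.
  exact.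
have S5 : M k (\sum_(i < A) f i * Dp i (Phi C g h) n - Phi A f v n).
  rewrite /Phi -sumrB; apply: Msum => i; rewrite -mulrBr; apply: M_Ml.
  rewrite -Dp_sub; apply: (Dp_Lo _ _ (leqnn n)) => t Ht.
  by apply: (lim_partial Hgh); rewrite /C; lia.
rewrite S3 in S2.
apply: Mtr S6 _; apply: Mtr (MBC S5) _; apply: Mtr (MBC S4) _; apply: Mtr S2 _; exact: S1.
Qed.


Notation ismul := (is_mul (@nonunit R) sigma delta).

Lemma lunit h : ismul (sone R) h h.
Proof.
move=> n k; exists 1%N => -[|N] // _; rewrite psumE /Phi big_ord_recl big1 ?addr0.
  by rewrite /sone /= mul1r subrr; apply: M0.
by move=> i _; rewrite /sone /= mul0r.
Qed.

Lemma Dp_sone i : Dp i (sone R) = (fun t => if t == i then 1 else 0).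
Proof.
elim: i => [|i IH]; first by apply: functional_extensionality => t; rewrite /sone.
rewrite Dp_S IH; apply: functional_extensionality => -[|t]; rewrite /D.
- by rewrite add0r; case: eqP => _; rewrite ?d1 ?d0.
- rewrite eqSS; case: (t.+1 == i); rewrite ?d1 ?d0 addr0;
  by case: (t == i); rewrite ?rmorph1 ?rmorph0.
Qed.

Lemma runit f : ismul f (sone R) f.
Proof.
move=> n k; exists n.+1 => N HN; rewrite psumE /Phi; under eq_bigr => i _ do rewrite Dp_sone.
rewrite (bigD1 (Ordinal HN)) //= eqxx mulr1 big1 ?addr0 ?subrr; first exact: M0.
move=> i Hi; case: eqP; rewrite ?mulr0 // => E.
by move: Hi; rewrite -val_eqE /= E eqxx.
Qed.

Lemma lim_uniq u l1 l2 : adic_lim (@nonunit R) u l1 -> adic_lim (@nonunit R) u l2 -> l1 = l2.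
Proof.
move=> H1 H2; apply/eqP; rewrite -subr_eq0; apply/eqP; apply: Hsep => k.
case: (H1 k) => N1 HN1; case: (H2 k) => N2 HN2.
exact: Mtr (MBC (HN1 _ (leq_maxl N1 N2))) (HN2 _ (leq_maxr N1 N2)).
Qed.

Lemma mul_one_units f g : ismul f g (sone R) ->
  f 0%N \is a GRing.unit /\ g 0%N \is a GRing.unit.
Proof.
move=> H; case: (H 0%N 1%N) => N HN; have := HN N.+1 (leqnSn _).
rewrite psumE /Phi big_ord_recl /= /sone /= => H1.
have H2 : M 1 (\sum_(i < N) f (bump 0 i) * Dp (bump 0 i) g 0).
  apply: Msum => i; apply: M_Ml; apply: (Mle _ (Dp_M _ _ _)); by rewrite subn0 /bump leq0n add1n.
have H3 : nonunit (f 0%N * g 0%N - 1).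
  apply/M1nu; have := MB H1 H2; rewrite addrAC addrK; exact.
have Hu : f 0%N * g 0%N \is a GRing.unit.
  case: (boolP (f 0%N * g 0%N \is a GRing.unit)) => // /negP Hn; exfalso.
  have : nonunit (f 0%N * g 0%N - (f 0%N * g 0%N - 1)).
    by apply: nuD => //; have := nuMr (a:=-1) H3; rewrite mulrN1.
  by rewrite opprB addrC subrK; apply; exact: unitr1.
split.
- case: (boolP (f 0%N \is a GRing.unit)) => // /negP Hn; exfalso.
  by apply: (nuMr (a:=g 0%N) Hn).
- case: (boolP (g 0%N \is a GRing.unit)) => // /negP Hn; exfalso.
  by apply: (nuMl (a:=f 0%N) Hn).
Qed.


Lemma Phi_add K f v w t : Phi K f (fun s => v s + w s) t = Phi K f v t + Phi K f w t.
Proof. by rewrite /Phi -big_split; apply: eq_bigr => i _; rewrite Dp_add mulrDr. Qed.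

Section Inv.
Variable f : nat -> R.
Hypothesis Hf0 : f 0%N \is a GRing.unit.

Fixpoint G (k : nat) : nat -> R :=
  match k with
  | 0 => fun _ => 0
  | k'.+1 => fun t => G k' t + (f 0%N)^-1 * (sone R t - Phi k'.+1 f (G k') t)
  end.
Definition E k t := sone R t - Phi k.+1 f (G k) t.

Lemma alg1 (x p t1 t2 : R) : x - (p + ((x - p) + t1) + t2) = - (t1 + t2).
Proof. by rewrite addrA [p + _]addrC subrK -addrA opprD addrA subrr add0r. Qed.

Lemma Phi_scal k (w : nat -> R) t :
  Phi k.+1 f (fun s => (f 0%N)^-1 * w s) t =
  w t + \sum_(i < k) f i.+1 * Dp i.+1 (fun s => (f 0%N)^-1 * w s) t.
Proof. by rewrite /Phi big_ord_recl /= mulrA mulrV // mul1r. Qed.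

Lemma E_F k : F k (E k).
Proof.
elim: k => [|k IH]; first exact: F0.
move=> t; rewrite /E [Phi k.+2 _ _ _]/Phi big_ord_recr /= -/(Phi k.+1 f _ t).
rewrite -Dp_S Phi_add Phi_scal alg1; apply: MN; apply: MD.
- apply: Msum => i; apply: M_Ml.
  have HF : F k (fun s => (f 0%N)^-1 * (sone R s - Phi k.+1 f (G k) s)).
    by move=> s; apply: M_Ml; apply: IH.
  by apply: (Mle _ (Dp_F i.+1 HF t)); lia.
- by apply: M_Ml; apply: Dp_M.
Qed.

Lemma G_cau q p t : (q <= p)%N -> M (q - t) (G p t - G q t).
Proof.
elim: p => [|p IH] Hq.
  by rewrite leqn0 in Hq; move/eqP: Hq => ->; rewrite subrr; apply: M0.
case: (ltnP q p.+1) => h.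
- have Hq2 : (q <= p)%N by lia.
  apply: Mtr _ (IH Hq2).
  rewrite /= addrAC subrr add0r; apply: M_Ml; apply: (Mle _ (E_F p t)); lia.
- have -> : q = p.+1 by lia.
  by rewrite subrr; apply: M0.
Qed.

Lemma G_cauchy t : adic_cauchy (@nonunit R) (fun k => G k t).
Proof.
move=> L; exists (t + L)%N => p q Hp Hq.
have E1 : (L <= t + L - t)%N by lia.
apply: Mtr (Mle E1 (G_cau t Hp)) (Mle E1 (MBC (G_cau t Hq))).
Qed.

Definition ginv t := proj1_sig (constructive_indefinite_description _ (Hcomp (G_cauchy t))).

Lemma ginv_lim t : adic_lim (@nonunit R) (fun k => G k t) (ginv t).
Proof. by rewrite /ginv; case: constructive_indefinite_description. Qed.

Lemma ginv_close k t : M (k - t) (ginv t - G k t).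
Proof.
case: (@ginv_lim t (k - t)%N) => N HN.
exact: Mtr (MBC (HN _ (leq_maxl N k))) (G_cau t (leq_maxr N k)).
Qed.

Lemma rinv : ismul f ginv (sone R).
Proof.
move=> n L; exists (n + L).+1 => N HN; rewrite psumE.
set k := (n + L)%N.
have X1 : M (k - n) (Phi N f ginv n - Phi N f (G k) n).
  by rewrite -Phi_sub; apply: Phi_F => t; apply: ginv_close.
have X2 : M (k - n) (Phi N f (G k) n - Phi k.+1 f (G k) n).
  by apply: (Mle _ (Phi_tail _ _ _ HN)); lia.
have X3 := E_F k n; rewrite /E in X3.
have -> : L = (k - n)%N by rewrite /k; lia.
exact: Mtr X1 (Mtr X2 (MBC X3)).
Qed.

End Inv.

Lemma units_iff f : sunit (@nonunit R) sigma delta f <-> f 0%N \is a GRing.unit.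
Proof.
split.
- by case=> g [H _]; exact: (mul_one_units H).1.
- move=> Hf; have Hfg := rinv Hf.
  have Hg0 := (mul_one_units Hfg).2.
  have Hgh := rinv Hg0.
  have Hfh := assoc Hfg Hgh (lunit _).
  have Ehf : ginv Hg0 = f.
    by apply: functional_extensionality => n; apply: (lim_uniq (Hfh n) (runit f n)).
  by exists (ginv Hf); split => //; rewrite -{2}Ehf.
Qed.

Lemma nsu f : ~ sunit (@nonunit R) sigma delta f -> nonunit (f 0%N).
Proof. by move=> H H1; apply: H; apply/units_iff. Qed.

Lemma skew : skew_local (@nonunit R) sigma delta.
Proof.
split; first by apply/units_iff; rewrite /sone /=; exact: unitr1.
split; first by move/units_iff; rewrite /szero; exact: nu0.
split.
  move=> f g Hf Hg /units_iff; rewrite /sadd; apply: nuD; exact: nsu.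
split.
- move=> a f h /nsu Hf Hm /units_iff; apply/M1nu.
  case: (Hm 0%N 1%N) => N HN; have := HN N (leqnn N); rewrite psumE => H1.
  have HP : M 1 (Phi N a f 0).
    apply: Msum => i; apply: M_Ml; apply: (@Dp_Lo 1 0) => //.
    by move=> t; rewrite leqn0 => /eqP ->; apply/M1nu.
  by have := MB HP H1; rewrite opprB addrC subrK.
- move=> a f h /nsu Hf Hm /units_iff; apply/M1nu.
  case: (Hm 0%N 1%N) => N HN; have := HN N (leqnn N); rewrite psumE => H1.
  have HP : M 1 (Phi N f a 0).
    apply: Msum => -[[|i] Hi] /=.
    + by apply: M_Mr; apply/M1nu.
    + by apply: M_Ml; rewrite -Dp_S; apply: (Mle _ (Dp_M _ _ _)); rewrite subn0.
  by have := MB HP H1; rewrite opprB addrC subrK.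
Qed.

End Work.

Theorem mainTheorem7 (R : unitRingType) (sigma : {rmorphism R -> R}) (delta : R -> R) :
  local_ring R ->
  adic_complete (@nonunit R) -> adic_separated (@nonunit R) ->
  (forall x, nonunit x -> nonunit (sigma x)) ->
  sigma_derivation sigma delta ->
  (forall x, nonunit (delta x)) ->
  (forall x, nonunit x -> idpow (@nonunit R) 2 (delta x)) ->
  (forall f : nat -> R, sunit (@nonunit R) sigma delta f <-> f 0%N \is a GRing.unit) /\
  skew_local (@nonunit R) sigma delta.
Proof.
move=> H1 H2 H3 H4 H5 H6 H7; split.
- move=> f; exact: units_iff.
- exact: skew.
Qed.
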